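(* Let $m,n$ be natural numbers with $m\geqslant3$, and let $c_1,C_1$ be positive constants. Let $(\psi_1,\dots,\psi_m)=\Psi:\mathbb{R}^n\to\mathbb{R}^m$ be a system of homogeneous linear forms whose coefficients are bounded in absolute value by $C_1$, and suppose $\Psi$ has $c_1$-Cauchy–Schwarz complexity $s$ for some finite $s$. Then for each $i\in[m]$ there is an extension $\Psi':\mathbb{R}^{n'}\to\mathbb{R}^m$ of $\Psi$ such that: (1) $n'=n+s+1\leqslant n+m-1$; (2) $\Psi'(\mathbf u,w_1,\dots,w_{s+1})=\Psi(\mathbf u+w_1\mathbf f_1+\dots+w_{s+1}\mathbf f_{s+1})$ for some vectors $\mathbf f_k\in\mathbb{R}^n$ with $\Vert\mathbf f_k\Vert_\infty=O_{c_1,C_1}(1)$ for every $k$; (3) $\Psi'$ is in normal form with respect to $\psi'_i$; (4) $\psi'_i(\mathbf0,\mathbf w)=w_1+\dots+w_{s+1}$.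
   Context: A linear map $\Psi:\mathbb{R}^n\to\mathbb{R}^m$ is viewed as a system of homogeneous linear forms $(\psi_1,\dots,\psi_m)$ (its coordinate functions) and identified with its $m\times n$ matrix; $\operatorname{dist}$ is $\ell^\infty$ distance between matrices (entries as coordinates). Normal form: $\Psi$ is in normal form with respect to $\psi_i$ if there is an integer $t\geqslant0$ and a set $J_i$ of $t+1$ standard basis vectors of $\mathbb{R}^n$ such that $\prod_{\mathbf e\in J_i}\psi_{i'}(\mathbf e)$ is non-zero for $i'=i$ and zero for every $i'\neq i$. Extension: $\Psi'=(\psi'_1,\dots,\psi'_m):\mathbb{R}^{n'}\to\mathbb{R}^m$ with $n'\geqslant n$ is an extension of $\Psi$ if $\Psi'(\mathbb{R}^{n'})=\Psi(\mathbb{R}^n)$ and $\Psi$ is the restriction of $\Psi'$ to $\mathbb{R}^n\times\{0\}^{n'-n}$. Suitable partitions: for $i\in[m]$, a partition $\mathcal P_i$ of $[m]\setminus\{i\}$ into disjoint parts $\mathcal C_1,\dots,\mathcal C_{t+1}$ is suitable for $\Psi$ if $\psi_i\notin\mathrm{span}_{\mathbb{R}}(\psi_j:j\in\mathcal C_k)$ for every $k$; $V_{\mathcal P_i}$ denotes the set of all systems $\Psi:\mathbb{R}^n\to\mathbb{R}^m$ for which $\mathcal P_i$ is not suitable. $c_1$-Cauchy–Schwarz complexity: for each $i$, $s_i+1$ is the minimal number of parts of a partition $\mathcal P_i$ of $[m]\setminus\{i\}$ with $\operatorname{dist}(\Psi,V_{\mathcal P_i})\geqslant c_1$ ($s_i=\infty$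 if none exists), and $s=\max(1,\max_is_i)$. $O_{c_1,C_1}(1)$ denotes a bound depending only on $c_1,C_1,m,n$. *)

(* Defs.v *)
From HB Require Import structures.
From mathcomp Require Import all_boot all_order all_algebra.
From mathcomp Require Import reals.
Set Implicit Arguments. Unset Strict Implicit. Unset Printing Implicit Defensive.
Import Order.TTheory GRing.Theory Num.Theory.
Local Open Scope ring_scope.

(* A system of m linear forms on R^n is an m x n matrix Psi; psi_i(x) = (Psi *m x) i 0,
   with x a column vector. The i-th form psi_i is the row i of Psi. *)

Definition mxdist {R : realType} {m n : nat} (A B : 'M[R]_(m, n)) : R :=
  \big[Num.max/0]_(i < m) \big[Num.max/0]_(j < n) `|A i j - B i j|.

(* A partition of [m]\{i} into t+1 parts is encoded by p : 'I_m -> 'I_(t.+1)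
   (the value p i is irrelevant); part k is C_k = {j | j != i /\ p j = k}.
   Parts are required to be nonempty. *)
Definition is_partition {m t : nat} (i : 'I_m) (p : 'I_m -> 'I_(t.+1)) : Prop :=
  forall k : 'I_(t.+1), exists j : 'I_m, j != i /\ p j = k.

Definition in_span_part {R : realType} {m n t : nat} (Phi : 'M[R]_(m, n))
    (i : 'I_m) (p : 'I_m -> 'I_(t.+1)) (k : 'I_(t.+1)) : Prop :=
  exists a : 'I_m -> R,
    row i Phi = \sum_(j < m | (j != i) && (p j == k)) a j *: row j Phi.

Definition suitable {R : realType} {m n t : nat} (Phi : 'M[R]_(m, n))
    (i : 'I_m) (p : 'I_m -> 'I_(t.+1)) : Prop :=
  forall k : 'I_(t.+1), ~ in_span_part Phi i p k.

Definition in_V {R : realType} {m n t : nat} (i : 'I_m) (p : 'I_m -> 'I_(t.+1))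
    (Phi : 'M[R]_(m, n)) : Prop := ~ suitable Phi i p.

Definition far_from_V {R : realType} {m n t : nat} (c1 : R) (Psi : 'M[R]_(m, n))
    (i : 'I_m) (p : 'I_m -> 'I_(t.+1)) : Prop :=
  forall Phi : 'M[R]_(m, n), in_V i p Phi -> c1 <= mxdist Psi Phi.

Definition good_partition_exists {R : realType} {m n : nat} (c1 : R)
    (Psi : 'M[R]_(m, n)) (i : 'I_m) (t : nat) : Prop :=
  exists p : 'I_m -> 'I_(t.+1), is_partition i p /\ far_from_V c1 Psi i p.

Definition is_s_i {R : realType} {m n : nat} (c1 : R) (Psi : 'M[R]_(m, n))
    (i : 'I_m) (si : nat) : Prop :=
  good_partition_exists c1 Psi i si /\
  forall t, good_partition_exists c1 Psi i t -> (si <= t)%N.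

Definition CS_complexity {R : realType} {m n : nat} (c1 : R) (Psi : 'M[R]_(m, n))
    (s : nat) : Prop :=
  exists si : 'I_m -> nat, (forall i, is_s_i c1 Psi i (si i)) /\
    s = maxn 1 (\max_(i < m) si i).

Definition is_extension {R : realType} {m n d : nat} (Psi : 'M[R]_(m, n))
    (Psi' : 'M[R]_(m, n + d)) : Prop :=
  (forall y : 'cV[R]_m,
     (exists x' : 'cV[R]_(n + d), y = Psi' *m x') <-> (exists x : 'cV[R]_n, y = Psi *m x)) /\
  (forall x : 'cV[R]_n, Psi' *m col_mx x 0 = Psi *m x).

(* Phi is in normal form with respect to phi_i. Phi(e_j) has i'-coordinate Phi i' j. *)
Definition normal_form {R : realType} {m N : nat} (Phi : 'M[R]_(m, N)) (i : 'I_m) : Prop :=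
  exists t : nat, exists J : {set 'I_N},
    #|J| = t.+1 /\
    (\prod_(j in J) Phi i j != 0) /\
    (forall i' : 'I_m, i' != i -> \prod_(j in J) Phi i' j = 0).

(* Main.v *)
Require Import Defs.
From HB Require Import structures.
From mathcomp Require Import all_boot all_order all_algebra.
From mathcomp Require Import reals.
From mathcomp Require Import zify ring lra.
Import Order.TTheory GRing.Theory Num.Theory.
Local Open Scope ring_scope.
Lemma sq_eq0 (R : realType) n (z : 'rV[R]_n) : z *m z^T = 0 -> z = 0.
Proof.
move=> h; apply/rowP => j; rewrite mxE.
have hs : \sum_k z 0 k ^+ 2 = 0.
  have := congr1 (fun M : 'M[R]_1 => M 0 0) h; rewrite /= mxE [RHS]mxE => e; rewrite -[RHS]e.
  by apply: eq_bigr => k _; rewrite mxE expr2.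
have := (@psumr_eq0P R _ predT (fun k => z 0 k ^+ 2)) (fun k _ => sqr_ge0 _) hs j isT.
by move/eqP; rewrite sqrf_eq0 => /eqP.
Qed.

Lemma decomp (R : realType) p n (A : 'M[R]_(p,n)) (a : 'rV[R]_n) :
  exists x : 'rV_p, exists r : 'rV_n, a = x *m A + r /\ r *m A^T = 0.
Proof.
set K := kermx A^T.
have capK : (A :&: K)%MS = 0.
  apply/matrixP => u v; rewrite [RHS]mxE.
  set z := row u (A :&: K)%MS.
  have zA : (z <= A)%MS by apply: submx_trans (row_sub _ _) (capmxSl _ _).
  have zK : (z <= K)%MS by apply: submx_trans (row_sub _ _) (capmxSr _ _).
  move/sub_kermxP: zK => zK.
  case/submxP: zA => x hx.
  have : z *m z^T = 0.
    rewrite {1}hx -mulmxA.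
    have -> : A *m z^T = (z *m A^T)^T by rewrite trmx_mul trmxK.
    by rewrite zK trmx0 mulmx0.
  move/sq_eq0 => z0.
  by have := congr1 (fun M : 'rV[R]_n => M 0 v) z0; rewrite !mxE.
have rk : \rank (A + K)%MS = n.
  have := mxrank_sum_cap A K; rewrite capK mxrank0 addn0 mxrank_ker mxrank_tr.
  by have := rank_leq_col A; lia.
have : (a <= A + K)%MS by apply: submx_full; rewrite /row_full rk.
case/sub_addsmxP => [[u1 u2]] /= ha.
exists u1, (u2 *m K); split => //.
by rewrite -mulmxA mulmx_ker mulmx0.
Qed.

Lemma part_vec (R : realType) m n t (c1 : R) (hc1 : 0 < c1) (Psi : 'M[R]_(m,n))
  (i : 'I_m) (p : 'I_m -> 'I_t.+1) (hf : far_from_V c1 Psi i p) (k : 'I_t.+1) :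
  exists g : 'cV[R]_n, (forall l, `|g l 0| <= c1^-1) /\ (Psi *m g) i 0 = 1 /\
    (forall j, j != i -> p j = k -> (Psi *m g) j 0 = 0).
Proof.
set A := \matrix_(j < m, l < n) (if (j != i) && (p j == k) then Psi j l else 0).
have [x [r [ha hr]]] := @decomp R _ _ A (row i Psi).
set Phi := \matrix_(a < m, l < n) (if a == i then (x *m A) 0 l else Psi a l).
have hV : in_V i p Phi.
  move=> hs; apply: (hs k); exists (fun j => x 0 j).
  apply/rowP => l; rewrite !mxE eqxx summxE [RHS]big_mkcond /=.
  apply: eq_bigr => j _; rewrite !mxE.
  case: ifP => [/andP[/negPf -> _]|_]; by rewrite ?mulr0 ?mxE.
have hd := hf Phi hV.
have hri : forall l, Psi i l = (x *m A) 0 l + r 0 l.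
  by move=> l; have := congr1 (fun M : 'rV[R]_n => M 0 l) ha; rewrite !mxE.
have [j0 hj0] : exists j0, c1 <= `|r 0 j0|.
  case: (boolP [exists j, c1 <= `|r 0 j|]) => [/existsP //|/existsPn hn].
  exfalso; move: hd; apply/negP; rewrite -ltNge.
  rewrite /mxdist; apply: (big_ind (fun v => v < c1)) => //.
    by move=> u v hu hv; rewrite gt_max hu hv.
  move=> a _; apply: (big_ind (fun v => v < c1)) => //.
    by move=> u v hu hv; rewrite gt_max hu hv.
  move=> l _; rewrite mxE; case: eqP => [->|_]; last by rewrite subrr normr0.
  by rewrite hri addrAC subrr add0r ltNge hn.
set S := (r *m r^T) 0 0.
have hS : S = \sum_l r 0 l ^+ 2.
  by rewrite /S mxE; apply: eq_bigr => l _; rewrite mxE expr2.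
have Sge : forall l, r 0 l ^+ 2 <= S.
  move=> l; rewrite hS (bigD1 l) //= lerDl; apply: sumr_ge0 => a _; exact: sqr_ge0.
have hc2 : c1 ^+ 2 <= `|r 0 j0| ^+ 2 by have := normr_ge0 (r 0 j0); nra.
have Spos : 0 < S.
  apply: (lt_le_trans (exprn_gt0 2 hc1)); apply: (le_trans hc2).
  by rewrite real_normK ?num_real.
have hAr : A *m r^T = 0 by rewrite -(trmxK A) -trmx_mul hr trmx0.
exists (S^-1 *: r^T); split; last split.
- move=> l; rewrite !mxE.
  have key : `|r 0 l| * c1 <= S.
    have e : r 0 l ^+ 2 = `|r 0 l| ^+ 2 by rewrite real_normK ?num_real.
    have := Sge l; rewrite e => hl.
    have hn := normr_ge0 (r 0 l).
    have h0 : `|r 0 j0| ^+ 2 <= S by rewrite real_normK ?num_real.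
    case: (leP c1 `|r 0 l|) => h; first by nra.
    by nra.
  rewrite normrM ger0_norm; last by rewrite invr_ge0 ltW.
  by rewrite ler_pdivrMl // ler_pdivlMr.
- have hPi : (Psi *m r^T) i 0 = S.
    have := congr1 (fun M : 'rV[R]_n => (M *m r^T) 0 0) ha => /=.
    by rewrite -row_mul mxE mulmxDl -mulmxA hAr mulmx0 add0r.
  by rewrite -scalemxAr mxE hPi mulVf // lt0r_neq0.
- move=> j hj hp; rewrite -scalemxAr mxE.
  have hrow : row j Psi = row j A by apply/rowP => l; rewrite !mxE hj hp eqxx.
  have := congr1 (fun M : 'rV[R]_n => (M *m r^T) 0 0) hrow => /=.
  by rewrite -!row_mul hAr !mxE => ->; rewrite mulr0.
Qed.

Lemma part_card m t (i : 'I_m) (p : 'I_m -> 'I_t.+1) :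
  is_partition i p -> (t.+1 <= m.-1)%N.
Proof.
move=> hp; have [w hw] := fin_all_exists hp.
have inj : injective w.
  by move=> a b e; rewrite -(proj2 (hw a)) -(proj2 (hw b)) e.
have e : #|[set w x | x in 'I_t.+1]| = t.+1 by rewrite card_imset // card_ord.
rewrite -e -[m in (_ <= m.-1)%N]card_ord -(cardsC1 i); apply: subset_leq_card.
by apply/subsetP => _ /imsetP [x _ ->]; rewrite !inE (proj1 (hw x)).
Qed.

Theorem proposition6p7 (R : realType) (m n : nat) (hm : (3 <= m)%N)
    (c1 C1 : R) (hc1 : 0 < c1) (hC1 : 0 < C1) :
  exists K : R,
  forall Psi : 'M[R]_(m, n),
    (forall (i : 'I_m) (j : 'I_n), `|Psi i j| <= C1) ->
  forall s : nat, CS_complexity c1 Psi s ->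
  forall i : 'I_m,
  exists (Psi' : 'M[R]_(m, n + s.+1)) (f : 'I_s.+1 -> 'cV[R]_n),
    [/\ (n + s.+1 <= n + m - 1)%N /\ is_extension Psi Psi',
        (forall k : 'I_s.+1, forall j : 'I_n, `|f k j 0| <= K),
        (forall (u : 'cV[R]_n) (w : 'cV[R]_s.+1),
           Psi' *m col_mx u w = Psi *m (u + \sum_(k < s.+1) w k 0 *: f k)),
        normal_form Psi' i
      & forall w : 'cV[R]_s.+1, (Psi' *m col_mx 0 w) i 0 = \sum_(k < s.+1) w k 0].
Proof.
exists c1^-1 => Psi _ s [si [hsi hs]] i.
have [[p [hpart hfar]] _] := hsi i.
set t := si i in p hpart hfar.
have hts : (t <= s)%N.
  rewrite hs; apply: leq_trans (leq_maxr 1 _); exact: leq_bigmax.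
have hX : (\max_(j < m) si j <= m.-2)%N.
  apply/bigmax_leqP => j _; have [[pj [hpj _]] _] := hsi j.
  by have := @part_card _ _ j pj hpj; lia.
have hsm : (s.+1 <= m.-1)%N by rewrite hs; lia.
have [g hg] := fin_all_exists (fun k => @part_vec R m n t c1 hc1 Psi i p hfar k).
set h : 'I_s.+1 -> 'I_t.+1 := fun k => inord k.
set f : 'I_s.+1 -> 'cV[R]_n := fun k => g (h k).
set F : 'M[R]_(n, s.+1) := \matrix_(j, k) f k j 0.
set Psi' := row_mx Psi (Psi *m F).
have hFw : forall w : 'cV[R]_s.+1, F *m w = \sum_k w k 0 *: f k.
  by move=> w; apply/colP => j; rewrite !mxE summxE; apply: eq_bigr => k _; rewrite !mxE mulrC.
have h3 : forall u w, Psi' *m col_mx u w = Psi *m (u + \sum_k w k 0 *: f k).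
  by move=> u w; rewrite mul_row_col -hFw mulmxDr mulmxA.
have hPF : forall i' k, (Psi *m F) i' k = (Psi *m f k) i' 0.
  by move=> i' k; rewrite !mxE; apply: eq_bigr => j _; rewrite mxE.
have hts' : (t.+1 <= s.+1)%N by [].
exists Psi', f; split.
- split; first by lia.
  split.
  + move=> y; split => [[x' ->]|[x ->]].
      exists (usubmx x' + F *m dsubmx x').
      by rewrite -{1}(vsubmxK x') mul_row_col mulmxDr mulmxA.
    by exists (col_mx x 0); rewrite mul_row_col mulmx0 addr0.
  + by move=> x; rewrite mul_row_col mulmx0 addr0.
- by move=> k j; case: (hg (h k)) => ->.
- exact: h3.
- exists s, [set rshift n k | k : 'I_s.+1]; split.
    by rewrite card_imset ?card_ord //; exact: rshift_inj.
  split.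
    rewrite big_imset /=; last by move=> a b _ _; apply: rshift_inj.
    rewrite big1 ?oner_neq0 // => k _.
    by rewrite row_mxEr hPF; case: (hg (h k)) => _ [-> _].
  move=> i' hi'; rewrite big_imset /=; last by move=> a b _ _; apply: rshift_inj.
  rewrite (bigD1 (widen_ord hts' (p i'))) //= row_mxEr hPF.
  rewrite /f; have -> : h (widen_ord hts' (p i')) = p i'.
    by apply: val_inj; rewrite /h /= inordK.
  by case: (hg (p i')) => _ [_ ->] //; rewrite mul0r.
- move=> w; rewrite h3 add0r mulmx_sumr summxE; apply: eq_bigr => k _.
  by rewrite -scalemxAr mxE; case: (hg (h k)) => _ [-> _]; rewrite mulr1.
Qed.
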